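(* If $X$ is a v-fibrant bisimplicial set, then $X$ is categorically constant, i.e. for every $n\ge0$ the map $X_{\star0}\to X_{\star n}$ induced by $[n]\to[0]$ is a weak categorical equivalence.
   Context: For a bisimplicial set $X$ and simplicial set $A$, $A\backslash X$ is the simplicial set whose $n$-simplices are maps $A\Box\Delta[n]\to X$, $(A\Box B)_{mn}=A_m\times B_n$. $X$ is v-fibrant if for every $m\ge0$ the map $\Delta[m]\backslash X\to\partial\Delta[m]\backslash X$ is a Kan fibration. $X_{\star n}$ denotes the $n$-th row of $X$. A map of simplicial sets $u:A\to B$ is a weak categorical equivalence if $\tau_0(B,Z)\to\tau_0(A,Z)$ is bijective for every quasi-category $Z$, where $\tau_0(A,Z)$ is the set of isomorphism classes of objects of the fundamental category of $Z^A$. *)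

(* Defs.v *)
From Stdlib Require Import FunctionalExtensionality ProofIrrelevance.
From mathcomp Require Import all_boot.
Set Implicit Arguments. Unset Strict Implicit. Unset Printing Implicit Defensive.

Definition monob m n (f : {ffun 'I_m.+1 -> 'I_n.+1}) : bool :=
  [forall i : 'I_m.+1, forall j : 'I_m.+1, (i <= j) ==> (f i <= f j)].

Lemma monoP m n (f : {ffun 'I_m.+1 -> 'I_n.+1}) :
  reflect (forall i j : 'I_m.+1, i <= j -> f i <= f j) (monob f).
Proof.
apply: (iffP forallP) => [H i j hij | H i]; first by move: (H i) => /forallP /(_ j) /implyP; apply.
by apply/forallP => j; apply/implyP; apply: H.
Qed.

Definition hom m n := {f : {ffun 'I_m.+1 -> 'I_n.+1} | monob f}.
Definition homf m n (f : hom m n) : 'I_m.+1 -> 'I_n.+1 := fun i => sval f i.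

Lemma hom_eq m n (f g : hom m n) : (forall i, homf f i = homf g i) -> f = g.
Proof. by move=> H; apply: val_inj; apply/ffunP => i; exact: H. Qed.

Lemma mkhom_subproof m n (f : 'I_m.+1 -> 'I_n.+1)
  (Hf : forall i j : 'I_m.+1, i <= j -> f i <= f j) : monob [ffun i => f i].
Proof. by apply/monoP => i j hij; rewrite !ffunE; apply: Hf. Qed.

Definition mkhom m n (f : 'I_m.+1 -> 'I_n.+1)
  (Hf : forall i j : 'I_m.+1, i <= j -> f i <= f j) : hom m n :=
  exist _ [ffun i => f i] (mkhom_subproof Hf).

Lemma mkhomE m n f Hf i : homf (@mkhom m n f Hf) i = f i.
Proof. by rewrite /homf /= ffunE. Qed.

Lemma homf_mono m n (f : hom m n) (i j : 'I_m.+1) : i <= j -> homf f i <= homf f j.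
Proof. by move: (svalP f) => /monoP; apply. Qed.

Definition hid n : hom n n := @mkhom n n id (fun i j h => h).

Definition hcomp m n p (g : hom n p) (f : hom m n) : hom m p :=
  @mkhom m p (fun i => homf g (homf f i))
    (fun i j h => homf_mono g (homf_mono f h)).

Lemma hcomp_idl m n (f : hom m n) : hcomp (hid n) f = f.
Proof. by apply: hom_eq => i; rewrite !mkhomE. Qed.
Lemma hcomp_idr m n (f : hom m n) : hcomp f (hid m) = f.
Proof. by apply: hom_eq => i; rewrite !mkhomE. Qed.
Lemma hcompA m n p q (h : hom p q) (g : hom n p) (f : hom m n) :
  hcomp h (hcomp g f) = hcomp (hcomp h g) f.
Proof. by apply: hom_eq => i; rewrite !mkhomE. Qed.

Definition coface n (i : 'I_n.+2) : hom n n.+1 :=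
  @mkhom n n.+1 (lift i) (fun a b h => (introT idP (eq_ind_r is_true h (leq_bump2 i a b)))).
Definition toZero n : hom n 0 := @mkhom n 0 (fun _ => ord0) (fun _ _ _ => leqnn 0).

Record sSet := SSet {
  simp :> nat -> Type;
  act : forall m n, hom m n -> simp n -> simp m;
  act_id : forall n (x : simp n), act (hid n) x = x;
  act_comp : forall m n p (f : hom m n) (g : hom n p) (x : simp p),
      act (hcomp g f) x = act f (act g x) }.
Arguments act {s m n} f x.

Record smap (A B : sSet) := SMap {
  smfun :> forall n, A n -> B n;
  smnat : forall m n (f : hom m n) (x : A n), smfun (act f x) = act f (smfun x) }.
Arguments smfun {A B} s {n} x.

Lemma smap_eq A B (f g : smap A B) : (forall n x, f n x = g n x) -> f = g.
Proof.
case: f g => f Hf [g Hg] /= H.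
have E : f = g.
  by apply: functional_extensionality_dep => n; apply: functional_extensionality => x; exact: H.
subst g; f_equal; apply: proof_irrelevance.
Qed.

Definition smid A : smap A A := @SMap A A (fun n x => x) (fun m n f x => erefl).
Definition smcomp A B C (g : smap B C) (f : smap A B) : smap A C :=
  @SMap A C (fun n x => g n (f n x))
    (fun m n h x => eq_trans (f_equal (g m) (smnat f h x)) (smnat g h (f n x))).

Definition Delta (n : nat) : sSet :=
  @SSet (fun m => hom m n) (fun m p f g => hcomp g f)
    (fun p g => hcomp_idr g) (fun m p q f g h => hcompA h g f).

Definition deltaMap m n (f : hom m n) : smap (Delta m) (Delta n) :=
  @SMap (Delta m) (Delta n) (fun j g => hcomp f g) (fun j k h g => hcompA f g h).

Section SubDelta.
Variables (n : nat) (P : forall j, hom j n -> bool)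
  (HP : forall j k (g : hom j k) (f : hom k n), P f -> P (hcomp f g)).

Definition subDelta_act j k (g : hom j k) (x : {f : hom k n | P f}) : {f : hom j n | P f} :=
  exist _ (hcomp (sval x) g) (HP g (svalP x)).

Lemma subDelta_id k (x : {f : hom k n | P f}) : subDelta_act (hid k) x = x.
Proof. by apply: val_inj; rewrite /= hcomp_idr. Qed.
Lemma subDelta_comp j k l (f : hom j k) (g : hom k l) (x : {f : hom l n | P f}) :
  subDelta_act (hcomp g f) x = subDelta_act f (subDelta_act g x).
Proof. by apply: val_inj; rewrite /= hcompA. Qed.

Definition subDelta : sSet := @SSet (fun j => {f : hom j n | P f}) subDelta_act
  subDelta_id subDelta_comp.

Definition subDeltaIncl : smap subDelta (Delta n) :=
  @SMap subDelta (Delta n) (fun j x => sval x) (fun j k g x => erefl).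
End SubDelta.

Definition bdry_pred n j (f : hom j n) : bool :=
  [exists i : 'I_n.+1, [forall a : 'I_j.+1, homf f a != i]].
Lemma bdry_closed n j k (g : hom j k) (f : hom k n) : bdry_pred f -> bdry_pred (hcomp f g).
Proof.
case/existsP => i /forallP H; apply/existsP; exists i; apply/forallP => a.
by rewrite mkhomE H.
Qed.
Definition bdry n : sSet := subDelta (@bdry_closed n).
Definition bdryIncl n : smap (bdry n) (Delta n) := subDeltaIncl (@bdry_closed n).

Definition horn_pred n (k : 'I_n.+1) j (f : hom j n) : bool :=
  [exists i : 'I_n.+1, (i != k) && [forall a : 'I_j.+1, homf f a != i]].
Lemma horn_closed n k j l (g : hom j l) (f : hom l n) :
  horn_pred k f -> horn_pred k (hcomp f g).
Proof.
case/existsP => i /andP [ik /forallP H]; apply/existsP; exists i; rewrite ik /=.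
by apply/forallP => a; rewrite mkhomE H.
Qed.
Definition horn n (k : 'I_n.+1) : sSet := subDelta (@horn_closed n k).
Definition hornIncl n (k : 'I_n.+1) : smap (horn k) (Delta n) := subDeltaIncl (@horn_closed n k).

Definition kan_fibration (E B : sSet) (p : smap E B) : Prop :=
  forall (n : nat) (k : 'I_n.+1), 0 < n ->
  forall (h : smap (horn k) E) (b : smap (Delta n) B),
    (forall j (x : horn k j), p j (h j x) = b j (hornIncl k j x)) ->
    exists l : smap (Delta n) E,
      (forall j (x : horn k j), l j (hornIncl k j x) = h j x) /\
      (forall j (x : Delta n j), p j (l j x) = b j x).

Definition quasi_category (Z : sSet) : Prop :=
  forall (n : nat) (k : 'I_n.+1), 0 < k < n ->
  forall h : smap (horn k) Z,
    exists l : smap (Delta n) Z, forall j (x : horn k j), l j (hornIncl k j x) = h j x.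

Definition prodS (A B : sSet) : sSet :=
  @SSet (fun n => (A n * B n)%type) (fun m n f x => (act f x.1, act f x.2))
    (fun n x => ltac:(by case: x => a b; rewrite /= !act_id))
    (fun m n p f g x => ltac:(by rewrite /= !act_comp)).

Definition smprod A A' B B' (u : smap A A') (v : smap B B') : smap (prodS A B) (prodS A' B') :=
  @SMap (prodS A B) (prodS A' B') (fun n x => (u n x.1, v n x.2))
    (fun m n f x => ltac:(by rewrite /= !smnat)).

Definition expS (A Z : sSet) : sSet :=
  @SSet (fun n => smap (prodS A (Delta n)) Z)
    (fun m n f s => smcomp s (smprod (smid A) (deltaMap f)))
    (fun n s => ltac:(by apply: smap_eq => j [a g]; rewrite /= hcomp_idl))
    (fun m n p f g s => ltac:(by apply: smap_eq => j [a h]; rewrite /= hcompA)).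

Section HoCat.
Variable K : sSet.
Definition ord1_2 : 'I_2 := @Ordinal 2 1 isT.
Definition ord1_3 : 'I_3 := @Ordinal 3 1 isT.
Definition ord2_3 : 'I_3 := @Ordinal 3 2 isT.
Definition esrc (e : K 1) : K 0 := act (coface ord1_2) e.
Definition etgt (e : K 1) : K 0 := act (coface (ord0 : 'I_2)) e.
Definition face2 (i : 'I_3) (s : K 2) : K 1 := act (coface i) s.
Definition degen (x : K 0) : K 1 := act (toZero 1) x.

Inductive kpath : K 0 -> K 0 -> seq (K 1) -> Prop :=
| kpath_nil x : kpath x x [::]
| kpath_cons x y e p : esrc e = x -> kpath (etgt e) y p -> kpath x y (e :: p).

(* the congruence on paths defining the morphisms of tau_1 K *)
Inductive hrel : K 0 -> K 0 -> seq (K 1) -> seq (K 1) -> Prop :=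
| hrel_refl x y p : kpath x y p -> hrel x y p p
| hrel_sym x y p q : hrel x y p q -> hrel x y q p
| hrel_trans x y p q r : hrel x y p q -> hrel x y q r -> hrel x y p r
| hrel_cong z x y w q p p' r : kpath z x q -> hrel x y p p' -> kpath y w r ->
    hrel z w (q ++ p ++ r) (q ++ p' ++ r)
| hrel_degen x : hrel x x [:: degen x] [::]
| hrel_simplex x z (s : K 2) : kpath x z [:: face2 ord2_3 s; face2 ord0 s] ->
    hrel x z [:: face2 ord2_3 s; face2 ord0 s] [:: face2 ord1_3 s].

Definition tau1_iso (x y : K 0) : Prop :=
  exists p q, [/\ kpath x y p, kpath y x q, hrel x x (p ++ q) [::] & hrel y y (q ++ p) [::]].
End HoCat.

Definition precomp (A B Z : sSet) (u : smap A B) (b : expS B Z 0) : expS A Z 0 :=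
  smcomp b (smprod u (smid (Delta 0))).

Definition weak_cat_equiv (A B : sSet) (u : smap A B) : Prop :=
  forall Z : sSet, quasi_category Z ->
    (forall b b' : expS B Z 0,
        tau1_iso (precomp u b) (precomp u b') -> tau1_iso b b') /\
    (forall a : expS A Z 0, exists b : expS B Z 0, tau1_iso (precomp u b) a).

Record bsSet := BSSet {
  bsimp :> nat -> nat -> Type;
  bact : forall m m' n n', hom m' m -> hom n' n -> bsimp m n -> bsimp m' n';
  bact_id : forall m n (x : bsimp m n), bact (hid m) (hid n) x = x;
  bact_comp : forall m m' m'' n n' n'' (f : hom m' m) (f' : hom m'' m')
      (g : hom n' n) (g' : hom n'' n') (x : bsimp m n),
      bact (hcomp f f') (hcomp g g') x = bact f' g' (bact f g x) }.
Arguments bact {_ m m' n n'} f g x.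

Record bsmap (X Y : bsSet) := BSMap {
  bsmfun :> forall m n, X m n -> Y m n;
  bsmnat : forall m m' n n' (f : hom m' m) (g : hom n' n) (x : X m n),
      bsmfun (bact f g x) = bact f g (bsmfun x) }.
Arguments bsmfun {X Y} _ {m n} x.

Lemma bsmap_eq X Y (f g : bsmap X Y) : (forall m n x, f m n x = g m n x) -> f = g.
Proof.
case: f g => f Hf [g Hg] /= H.
have E : f = g.
  apply: functional_extensionality_dep => m; apply: functional_extensionality_dep => n.
  by apply: functional_extensionality => x; exact: H.
subst g; f_equal; apply: proof_irrelevance.
Qed.

Definition bscomp X Y W (g : bsmap Y W) (f : bsmap X Y) : bsmap X W :=
  @BSMap X W (fun m n x => g m n (f m n x))
    (fun m m' n n' a b x => eq_trans (f_equal (g m' n') (bsmnat f a b x)) (bsmnat g a b (f m n x))).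

Definition box (A B : sSet) : bsSet :=
  @BSSet (fun m n => (A m * B n)%type) (fun m m' n n' f g x => (act f x.1, act g x.2))
    (fun m n x => ltac:(by case: x => a b; rewrite /= !act_id))
    (fun m m' m'' n n' n'' f f' g g' x => ltac:(by rewrite /= !act_comp)).

Definition boxmap A A' B B' (u : smap A A') (v : smap B B') : bsmap (box A B) (box A' B') :=
  @BSMap (box A B) (box A' B') (fun m n x => (u m x.1, v n x.2))
    (fun m m' n n' f g x => ltac:(by rewrite /= !smnat)).

Definition slash (A : sSet) (X : bsSet) : sSet :=
  @SSet (fun n => bsmap (box A (Delta n)) X)
    (fun m n f s => bscomp s (boxmap (smid A) (deltaMap f)))
    (fun n s => ltac:(by apply: bsmap_eq => i j [a g]; rewrite /= hcomp_idl))
    (fun m n p f g s => ltac:(by apply: bsmap_eq => i j [a h]; rewrite /= hcompA)).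

Definition slashMap (A B : sSet) (u : smap A B) (X : bsSet) : smap (slash B X) (slash A X) :=
  @SMap (slash B X) (slash A X) (fun n s => bscomp s (boxmap u (smid (Delta n))))
    (fun m n f s => ltac:(by apply: bsmap_eq => i j [a g])).

Definition v_fibrant (X : bsSet) : Prop :=
  forall m : nat, kan_fibration (slashMap (bdryIncl m) X).

Lemma hid_comp n : hid n = hcomp (hid n) (hid n).
Proof. by rewrite hcomp_idl. Qed.

Definition row (X : bsSet) (n : nat) : sSet :=
  @SSet (fun m => X m n) (fun m m' f x => bact f (hid n) x)
    (fun m x => bact_id x)
    (fun m m' m'' f g x => ltac:(by rewrite [in LHS]hid_comp bact_comp)).

Lemma rowMap_nat (X : bsSet) n m m' (f : hom m' m) (x : X m 0) :
  bact (hid m') (toZero n) (bact f (hid 0) x) = bact f (hid n) (bact (hid m) (toZero n) x).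
Proof.
by rewrite -!bact_comp !hcomp_idl !hcomp_idr.
Qed.

Definition rowMap (X : bsSet) (n : nat) : smap (row X 0) (row X n) :=
  @SMap (row X 0) (row X n) (fun m x => bact (hid m) (toZero n) x)
    (fun m m' f x => rowMap_nat n f x).

(* Main.v *)
Require Import Defs.
From mathcomp Require Import all_boot.
From Stdlib Require Import FunctionalExtensionality ProofIrrelevance Classical ClassicalEpsilon.
From mathcomp Require Import zify.
Set Implicit Arguments. Unset Strict Implicit. Unset Printing Implicit Defensive.


Definition surj m n (f : hom m n) : Prop := forall c, exists a, homf f a = c.

Lemma homfE m n p (g : hom n p) (f : hom m n) i : homf (hcomp g f) i = homf g (homf f i).
Proof. by rewrite mkhomE. Qed.
Lemma homf_id n i : homf (hid n) i = i.
Proof. by rewrite mkhomE. Qed.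
Lemma homf_coface n (i : 'I_n.+2) a : homf (coface i) a = lift i a.
Proof. by rewrite mkhomE. Qed.

Lemma surj_id n : surj (hid n).
Proof. by move=> c; exists c; rewrite homf_id. Qed.

Lemma surj_comp m n p (g : hom n p) (f : hom m n) : surj g -> surj f -> surj (hcomp g f).
Proof.
move=> sg sf c; case: (sg c) => b <-; case: (sf b) => a <-; exists a; by rewrite homfE.
Qed.

Lemma hom0_eq k (f g : hom k 0) : f = g.
Proof. by apply: hom_eq => i; apply: val_inj; rewrite /=; case: (homf f i) => [[]] //; case: (homf g i) => [[]]. Qed.

Lemma ord1_eq (a b : 'I_1) : a = b.
Proof. by apply: val_inj; case: a => [[]] //; case: b => [[]]. Qed.

Lemma squeeze_lt n (i : 'I_n.+2) (x : 'I_n.+2) : minn (unbump i x) n < n.+1.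
Proof. by rewrite ltnS geq_minr. Qed.

Definition squeeze k n (i : 'I_n.+2) (f : hom k n.+1) : hom k n :=
  @mkhom k n (fun a => Ordinal (squeeze_lt i (homf f a)))
    (fun a b h => ltac:(rewrite /= leq_min geq_minr andbT; apply: leq_trans (geq_minl _ _) _;
        rewrite /unbump; move: (homf_mono f h); case: ltnP; case: ltnP; lia)).

Lemma squeezeK k n (i : 'I_n.+2) (f : hom k n.+1) :
  (forall a, homf f a != i) -> hcomp (coface i) (squeeze i f) = f.
Proof.
move=> H; apply: hom_eq => a; rewrite homfE homf_coface mkhomE; apply: val_inj => /=.
have Hne : (homf f a : nat) != i := H a.
have le : unbump i (homf f a) <= n.
  rewrite /unbump; move: (ltn_ord (homf f a)) (ltn_ord i) Hne; case: ltnP => /=; lia.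
rewrite (minn_idPl le) unbumpKcond.
by have -> : (homf f a == i :> nat) = false by apply/negbTE.
Qed.

Lemma not_surj_miss m n (f : hom m n) : ~ surj f -> exists c, forall a, homf f a != c.
Proof.
move=> ns; apply: NNPP => H; apply: ns => c; apply: NNPP => H2; apply: H; exists c => a.
by apply/eqP => E; apply: H2; exists a.
Qed.

Lemma factor_hom l k (f : hom k l) : exists j (s : hom k j) (i : hom j l),
  [/\ surj s, f = hcomp i s, j <= l & (surj f \/ j < l)].
Proof.
elim: l k f => [|l IH] k f.
  exists 0, f, (hid 0); split => //; first by move=> c; exists ord0; apply: ord1_eq.
    by rewrite hcomp_idl.
  by left=> c; exists ord0; apply: ord1_eq.
case: (classic (surj f)) => sf.
  by exists l.+1, f, (hid l.+1); split => //; [rewrite hcomp_idl | left].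
case: (not_surj_miss sf) => c Hc.
case: (IH _ (squeeze c f)) => j [s [i [ss E le _]]].
exists j, s, (hcomp (coface c) i); split => //.
- by rewrite -hcompA -E squeezeK.
- by apply: leqW.
- by right.
Qed.

Lemma hom_inj_le m n (f : hom m n) : injective (homf f) -> m <= n.
Proof. by move=> inj; have := @leq_card _ _ (homf f) inj; rewrite !card_ord. Qed.

Lemma sections k j (s : hom k j) : surj s ->
  exists d1 d2 : hom j k, [/\ forall c, homf s (homf d1 c) = c,
     forall c, homf s (homf d2 c) = c &
     forall a, homf d1 (homf s a) <= a /\ a <= homf d2 (homf s a)].
Proof.
move=> ss.
pose P1 (c : 'I_j.+1) := fun a : nat => (a < k.+1) && (c <= homf s (inord a)).
have ex1 c : exists a, P1 c a.
  case: (ss c) => a Ha; exists a; rewrite /P1 ltn_ord inord_val Ha leqnn //.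
pose P2 (c : 'I_j.+1) := fun a : nat => (a < k.+1) && (homf s (inord a) <= c).
have ex2 c : exists a, P2 c a.
  case: (ss c) => a Ha; exists a; rewrite /P2 ltn_ord inord_val Ha leqnn //.
have ub2 c a : P2 c a -> a <= k by case/andP.
pose f1 c := ex_minn (ex1 c).
pose f2 c := ex_maxn (ex2 c) (ub2 c).
have f1lt c : f1 c < k.+1 by rewrite /f1; case: ex_minnP => a /andP[].
have f2lt c : f2 c < k.+1 by rewrite /f2; case: ex_maxnP => a /andP[].
have f1mono (c c' : 'I_j.+1) : c <= c' -> f1 c <= f1 c'.
  move=> le; rewrite /f1; case: ex_minnP => a Pa mina; case: ex_minnP => a' Pa' _.
  apply: mina; case/andP: Pa' => h1 h2; rewrite /P1 h1 /=; exact: leq_trans le h2.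
have f2mono (c c' : 'I_j.+1) : c <= c' -> f2 c <= f2 c'.
  move=> le; rewrite /f2; case: ex_maxnP => a Pa _; case: ex_maxnP => a' Pa' maxa'.
  apply: maxa'; case/andP: Pa => h1 h2; rewrite /P2 h1 /=; exact: leq_trans h2 le.
pose d1 := @mkhom j k (fun c => Ordinal (f1lt c)) (fun c c' h => f1mono c c' h).
pose d2 := @mkhom j k (fun c => Ordinal (f2lt c)) (fun c c' h => f2mono c c' h).
have sd1 c : homf s (homf d1 c) = c.
  rewrite mkhomE; apply/val_inj/eqP; rewrite eqn_leq.
  move: (f1lt c); rewrite /f1; case: ex_minnP => a /andP[alt Pa] mina alt' /=.
  have -> : Ordinal alt' = inord a by apply: val_inj; rewrite /= inordK.
  rewrite Pa andbT.
  case: (ss c) => b Hb.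
  have ab : a <= b by apply: mina; rewrite /P1 ltn_ord inord_val Hb leqnn.
  have := homf_mono s (_ : inord a <= b); rewrite Hb; apply; rewrite inordK //.
have sd2 c : homf s (homf d2 c) = c.
  rewrite mkhomE; apply/val_inj/eqP; rewrite eqn_leq.
  move: (f2lt c); rewrite /f2; case: ex_maxnP => a /andP[alt Pa] maxa alt' /=.
  have -> : Ordinal alt' = inord a by apply: val_inj; rewrite /= inordK.
  rewrite Pa /=.
  case: (ss c) => b Hb.
  have ba : b <= a by apply: maxa; rewrite /P2 ltn_ord inord_val Hb leqnn.
  have := homf_mono s (_ : b <= inord a); rewrite Hb; apply; rewrite inordK //.
exists d1, d2; split => // a; rewrite !mkhomE /=; split.
  rewrite /f1; case: ex_minnP => b Pb minb; apply: minb.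
  by rewrite /P1 ltn_ord inord_val leqnn.
rewrite /f2; case: ex_maxnP => b Pb maxb; apply: maxb.
by rewrite /P2 ltn_ord inord_val leqnn.
Qed.

Lemma surj_le k j (s : hom k j) : surj s -> j <= k.
Proof.
move=> /sections [d1 [d2 [H _ _]]]; apply: (hom_inj_le (f := d1)).
by move=> x y E; rewrite -(H x) -(H y) E.
Qed.

Lemma inj_endo_id j (g : hom j j) : injective (homf g) -> g = hid j.
Proof.
move=> inj.
have st (a b : 'I_j.+1) : a < b -> homf g a < homf g b.
  move=> ab; rewrite ltn_neqAle homf_mono ?(ltnW ab) // andbT.
  apply/eqP => E; move/val_inj: E => /inj E; by rewrite E ltnn in ab.
have ge (a : 'I_j.+1) : a <= homf g a.
  case: a => a Ha; elim: a Ha => [|a IH] Ha //=.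
  have Ha' : a < j.+1 by apply: ltnW.
  have := st (Ordinal Ha') (Ordinal Ha) (ltnSn a); have := IH Ha'. move=> /= h1 h2; lia.
apply: hom_eq => a; rewrite homf_id; apply: val_inj; apply/eqP; rewrite eqn_leq ge andbT.
have key t (Ht : a + t < j.+1) : homf g a + t <= homf g (Ordinal Ht).
  elim: t Ht => [|t IH] Ht.
    by rewrite addn0; have -> : Ordinal Ht = a by apply: val_inj; rewrite /= addn0.
  have Ht' : a + t < j.+1 by lia.
  have := IH Ht'; have := st (Ordinal Ht') (Ordinal Ht) (_ : _ < _); rewrite /=; lia.
have Ht : a + (j - a) < j.+1 by have := ltn_ord a; lia.
have := key _ Ht; have := ltn_ord (homf g (Ordinal Ht)); have := ltn_ord a; rewrite /=; lia.
Qed.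

Lemma surj_endo_id j (g : hom j j) : surj g -> g = hid j.
Proof.
move=> /sections [d1 [d2 [H _ _]]].
have : d1 = hid j by apply: inj_endo_id => x y E; rewrite -(H x) -(H y) E.
move=> E; apply: hom_eq => c; by rewrite homf_id -{2}(H c) E homf_id.
Qed.

Lemma surj_eq_of_sections k j (s t : hom k j) (d1 d2 : hom j k) :
  (forall a, homf d1 (homf s a) <= a /\ a <= homf d2 (homf s a)) ->
  hcomp t d1 = hid j -> hcomp t d2 = hid j -> t = s.
Proof.
move=> H E1 E2; apply: hom_eq => a; apply/val_inj/eqP; rewrite eqn_leq.
case: (H a) => h1 h2.
have := homf_mono t h1; have := homf_mono t h2.
have F1 : homf t (homf d1 (homf s a)) = homf s a by rewrite -homfE E1 homf_id.
have F2 : homf t (homf d2 (homf s a)) = homf s a by rewrite -homfE E2 homf_id.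
by rewrite F1 F2 => -> ->.
Qed.
Section Glue.
Variables (E : sSet) (n : nat) (S : pred 'I_n.+2) (P : forall j, hom j n.+1 -> bool)
  (HP : forall j k (g : hom j k) (f : hom k n.+1), P f -> P (hcomp f g))
  (HPe : forall j (f : hom j n.+1), P f = [exists i, (i \in S) && [forall a, homf f a != i]])
  (y : 'I_n.+2 -> E n)
  (compat : forall i j, i \in S -> j \in S -> i != j -> forall k (f g : hom k n), k < n ->
     hcomp (coface j) f = hcomp (coface i) g -> act f (y j) = act g (y i)).

Lemma coface_inj k (i : 'I_n.+2) (f g : hom k n) : hcomp (coface i) f = hcomp (coface i) g -> f = g.
Proof.
move=> E1; apply: hom_eq => a; apply: (@lift_inj _ i).
by rewrite -!homf_coface -!homfE E1.
Qed.

Lemma compat_all i j : i \in S -> j \in S -> forall k (f g : hom k n),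
  hcomp (coface j) f = hcomp (coface i) g -> act f (y j) = act g (y i).
Proof.
move=> iS jS k f g E1.
case: (eqVneq i j) => [eij|nij].
  by subst j; rewrite (coface_inj E1).
case: (factor_hom f) => i0 [s [io [ss Ef le Hor]]].
have ilt : i0 < n.
  case: Hor => // sf; exfalso.
  case: (unliftP j i) => [c Ec|Ec]; last by rewrite Ec eqxx in nij.
  case: (sf c) => a Ha.
  have := f_equal (fun h => homf h a) E1; rewrite !homfE !homf_coface Ha -Ec => E2.
  by move: (neq_lift i (homf g a)); rewrite -E2 eqxx.
case: (sections ss) => d1 [d2 [sd1 _ _]].
pose g0 := hcomp g d1.
have E2 : hcomp (coface j) io = hcomp (coface i) g0.
  apply: hom_eq => c; rewrite !homfE.
  have := f_equal (fun h => homf h (homf d1 c)) E1; rewrite !homfE Ef homfE sd1 => ->.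
  by [].
have Eg : g = hcomp g0 s.
  apply: hom_eq => a; apply: (@lift_inj _ i); rewrite -!homf_coface.
  have := f_equal (fun h => homf h a) E1; rewrite !homfE => <-.
  have := f_equal (fun h => homf h (homf d1 (homf s a))) E1; rewrite !homfE => <-.
  by rewrite Ef !homfE sd1.
rewrite Ef Eg !act_comp; congr (act s _); rewrite -act_comp; exact: (compat iS jS nij ilt E2).
Qed.

Definition pick_i k (f : hom k n.+1) : 'I_n.+2 :=
  odflt ord0 [pick i | (i \in S) && [forall a, homf f a != i]].

Lemma pick_iP k (f : hom k n.+1) : P f -> pick_i f \in S /\ forall a, homf f a != pick_i f.
Proof.
rewrite HPe /pick_i; case: pickP => [i /andP [iS /forallP H]|H] /=; first by [].
by case/existsP => i; rewrite H.
Qed.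

Definition glue_fun k (x : subDelta HP k) : E k :=
  act (squeeze (pick_i (sval x)) (sval x)) (y (pick_i (sval x))).

Lemma glue_nat k l (g : hom k l) (x : subDelta HP l) :
  glue_fun (act g x) = act g (glue_fun x).
Proof.
case: x => F PF; rewrite /glue_fun /=.
have [i1S i1m] := pick_iP (HP g PF).
have [i0S i0m] := pick_iP PF.
rewrite -act_comp; apply: compat_all => //.
by rewrite squeezeK // hcompA squeezeK.
Qed.

Definition glue : smap (subDelta HP) E := @SMap (subDelta HP) E glue_fun glue_nat.

Lemma glue_face i (Pi : P (coface i)) : i \in S -> glue n (exist _ (coface i) Pi) = y i.
Proof.
move=> iS; rewrite /= /glue_fun /=.
have [i1S i1m] := pick_iP Pi.
transitivity (act (hid n) (y i)); last by rewrite act_id.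
apply: compat_all => //.
by rewrite squeezeK // hcomp_idr.
Qed.

Lemma glue_val k (x : subDelta HP k) : exists i (f' : hom k n),
  [/\ i \in S, sval x = hcomp (coface i) f' & glue k x = act f' (y i)].
Proof.
case: x => F PF; have [iS im] := pick_iP PF.
exists (pick_i F), (squeeze (pick_i F) F); split => //=.
by rewrite squeezeK.
Qed.
End Glue.
Lemma coface_bdry m (i : 'I_m.+2) : bdry_pred (coface i).
Proof. by apply/existsP; exists i; apply/forallP => a; rewrite homf_coface eq_sym neq_lift. Qed.

Lemma bdry_predE m j (f : hom j m.+1) :
  bdry_pred f = [exists i, (i \in predT) && [forall a, homf f a != i]].
Proof. by apply: eq_existsb => i. Qed.

Lemma not_surj_bdry k m (f : hom k m) : k < m -> bdry_pred f.
Proof.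
move=> lt; have ns : ~ surj f by move=> /surj_le; rewrite leqNgt lt.
case: (not_surj_miss ns) => c Hc; apply/existsP; exists c; exact/forallP.
Qed.

Section EZ.
Variable B : sSet.
Definition nondeg j (g : B j) :=
  ~ exists k (g0 : B k) (f : hom j k), k < j /\ g = act f g0.

Lemma EZ_exists j (g : B j) : exists i (g0 : B i) (r : hom j i),
  [/\ i <= j, nondeg g0, surj r & g = act r g0].
Proof.
elim/ltn_ind: j g => j IH g.
case: (classic (nondeg g)) => nd.
  exists j, g, (hid j); split => //; [exact: surj_id | by rewrite act_id].
move/NNPP: nd => [k [g0 [f [lt E1]]]].
case: (factor_hom f) => i [s [io [ss Ef le _]]].
have [i1 [g1 [r [le1 nd1 sr E2]]]] := IH i (leq_ltn_trans le lt) (act io g0).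
exists i1, g1, (hcomp r s); split => //.
- by apply: leq_trans le1 (ltnW (leq_ltn_trans le lt)).
- exact: surj_comp.
- by rewrite E1 Ef act_comp E2 -act_comp.
Qed.

Lemma section_hom k j (s : hom k j) (d : hom j k) :
  (forall c, homf s (homf d c) = c) -> hcomp s d = hid j.
Proof. by move=> H; apply: hom_eq => c; rewrite homfE H homf_id. Qed.

Lemma EZ_le M j j' (g : B j) (g' : B j') (s : hom M j) (s' : hom M j') :
  nondeg g -> surj s -> act s g = act s' g' -> j <= j'.
Proof.
move=> nd ss E1; case: (sections ss) => d1 [d2 [sd1 _ _]].
have E2 : g = act (hcomp s' d1) g'.
  by rewrite act_comp -E1 -act_comp section_hom // act_id.
rewrite leqNgt; apply/negP => lt; apply: nd; by exists j', g', (hcomp s' d1).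
Qed.

Lemma EZ_same M j (g g' : B j) (s s' : hom M j) :
  nondeg g -> surj s -> act s g = act s' g' -> g = g' /\ s = s'.
Proof.
move=> nd ss E1; case: (sections ss) => d1 [d2 [sd1 sd2 Hd]].
have aux d : hcomp s d = hid j -> hcomp s' d = hid j /\ g = g'.
  move=> Ed.
  have E2 : g = act (hcomp s' d) g' by rewrite act_comp -E1 -act_comp Ed act_id.
  case: (classic (surj (hcomp s' d))) => st.
    by move: (surj_endo_id st) => Eid; split => //; rewrite E2 Eid act_id.
  case: (factor_hom (hcomp s' d)) => i [t [io [st' Et le [//|lt]]]].
  exfalso; apply: nd; exists i, (act io g'), t; split => //.
  by rewrite E2 Et act_comp.
have [h1 eg] := aux _ (section_hom sd1).
have [h2 _] := aux _ (section_hom sd2).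
split => //; symmetry; exact: surj_eq_of_sections Hd h1 h2.
Qed.
End EZ.

Section Construct.
Variables (B E : sSet) (P : forall m, B m -> E m -> Prop)
  (HPs : forall m k (s : hom k m) (b : B m) y, surj s -> P b y -> P (act s b) (act s y))
  (Or0 : forall b : B 0, exists y, P b y)
  (OrS : forall m (b : B m.+1) (g : smap (bdry m.+1) E),
     (forall i : 'I_m.+2, P (act (coface i) b) (g m (exist _ (coface i) (coface_bdry i)))) ->
     exists y, P b y /\ forall j (f : bdry m.+1 j), act (sval f) y = g j f).

Definition Lot := forall k, B k -> option (E k).

Definition Spec (Lo : Lot) m (b : B m) (y : E m) : Prop :=
  [/\ P b y,
   forall k (f : hom k m), k < m -> Lo k (act f b) = Some (act f y) &
   forall j (g : B j) (s : hom m j), j < m -> b = act s g ->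
     exists z, Lo j g = Some z /\ y = act s z].

Definition choiceSpec (Lo : Lot) k (b : B k) : option (E k) :=
  match excluded_middle_informative (exists y, Spec Lo b y) with
  | left H => Some (proj1_sig (constructive_indefinite_description _ H))
  | right _ => None end.

Lemma choiceSpecP Lo k (b : B k) : (exists y, Spec Lo b y) ->
  exists y, choiceSpec Lo b = Some y /\ Spec Lo b y.
Proof.
move=> H; rewrite /choiceSpec; case: excluded_middle_informative => // H'.
by case: constructive_indefinite_description => y Hy /=; exists y.
Qed.

Definition ext (Lo : Lot) m : Lot := fun k b =>
  if k < m then Lo k b else if k == m then choiceSpec Lo b else None.

Fixpoint stage m : Lot := match m with 0 => fun k b => None | m'.+1 => ext (stage m') m' end.

Definition Inv m (Lo : Lot) :=
  (forall k (b : B k), k < m -> exists y, Lo k b = Some y /\ P b y) /\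
  (forall k j (f : hom k j) (b : B j) y, k < m -> j < m -> Lo j b = Some y ->
      Lo k (act f b) = Some (act f y)).

Lemma spec_exists m Lo : Inv m Lo -> forall b : B m, exists y, Spec Lo b y.
Proof.
move=> [I1 I2] b.
case: (classic (exists j (g : B j) (s : hom m j), j < m /\ b = act s g)) => D.
  have [i [g0 [r [le nd sr Eb]]]] := EZ_exists b.
  have ilt : i < m.
    rewrite ltn_neqAle le andbT; apply/eqP => ei; subst i.
    move: (surj_endo_id sr) => Er; rewrite Er act_id in Eb; subst g0.
    by apply: nd; case: D => j [g [s [lt E1]]]; exists j, g, s.
  have [z [Lz Pz]] := I1 _ g0 ilt.
  exists (act r z); split.
  - by rewrite Eb; apply: HPs.
  - move=> k f lt; rewrite Eb -act_comp (I2 _ _ _ _ _ lt ilt Lz) act_comp //.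
  - move=> j' g' s' lt' E1.
    have [z' [Lz' Pz']] := I1 _ g' lt'.
    exists z'; split => //.
    case: (factor_hom s') => i2 [t [io [st Es le2 _]]].
    have [i3 [g3 [r3 [le3 nd3 sr3 E3]]]] := EZ_exists (act io g').
    have Eb3 : b = act (hcomp r3 t) g3 by rewrite E1 Es act_comp E3 -act_comp.
    have e1 : i <= i3 by exact: (EZ_le nd sr (etrans (esym Eb) Eb3)).
    have e2 : i3 <= i by exact: (EZ_le nd3 (surj_comp sr3 st) (etrans (esym Eb3) Eb)).
    have e : i3 = i by apply/eqP; rewrite eqn_leq e1 e2.
    subst i3.
    have [eg er] := EZ_same nd sr (etrans (esym Eb) Eb3); subst g3.
    have i2lt : i2 < m by apply: leq_ltn_trans le2 lt'.
    have L1 := I2 _ _ io _ _ i2lt lt' Lz'.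
    have L2 := I2 _ _ r3 _ _ i2lt ilt Lz.
    rewrite -E3 L1 in L2; case: L2 => L2.
    by rewrite Es act_comp L2 -act_comp er.
case: m b I1 I2 D => [|m] b I1 I2 D.
  have [y Py] := Or0 b; exists y; split => // k f; by rewrite ltn0.
have Hf i : exists z, Lo m (act (coface i) b) = Some z /\ P (act (coface i) b) z.
  exact: I1.
pose yf i := proj1_sig (constructive_indefinite_description _ (Hf i)).
have Hyf i : Lo m (act (coface i) b) = Some (yf i) /\ P (act (coface i) b) (yf i).
  by rewrite /yf; case: constructive_indefinite_description.
have compat : forall i j, i \in predT -> j \in predT -> i != j -> forall k (f g : hom k m), k < m ->
     hcomp (coface j) f = hcomp (coface i) g -> act f (yf j) = act g (yf i).
  move=> i j _ _ _ k f g lt Ec.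
  have L1 := I2 _ _ f _ _ (leqW lt) (ltnSn m) (proj1 (Hyf j)).
  have L2 := I2 _ _ g _ _ (leqW lt) (ltnSn m) (proj1 (Hyf i)).
  rewrite -act_comp in L1; rewrite -act_comp in L2.
  by rewrite Ec L2 in L1; case: L1.
pose g := glue (@bdry_closed m.+1) (@bdry_predE m) compat.
have [y [Py Hy]] : exists y, P b y /\ forall j (f : bdry m.+1 j), act (sval f) y = g j f.
  apply: OrS => i; rewrite /g glue_face //; exact: (proj2 (Hyf i)).
exists y; split => //.
- move=> k f lt.
  pose x : bdry m.+1 k := exist _ f (not_surj_bdry f lt).
  have [i [f' [_ Ef Ev]]] := glue_val (@bdry_predE m) compat x.
  have Hx := Hy k x; rewrite Ev in Hx.
  change (act f y = act f' (yf i)) in Hx; change (f = hcomp (coface i) f') in Ef.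
  rewrite Hx Ef act_comp.
  by apply: I2 (proj1 (Hyf i)) => //; rewrite -ltnS.
- by move=> j g0 s lt E1; exfalso; apply: D; exists j, g0, s.
Qed.

Lemma step m Lo : Inv m Lo -> Inv m.+1 (ext Lo m).
Proof.
move=> I; have [I1 I2] := I.
have Hm (b : B m) : exists y, ext Lo m b = Some y /\ Spec Lo b y.
  rewrite /ext ltnn eqxx; apply: choiceSpecP; exact: spec_exists.
have Hlt k (b : B k) : k < m -> ext Lo m b = Lo k b by rewrite /ext => ->.
split.
  move=> k b; rewrite ltnS leq_eqVlt => /orP [/eqP ek|lt].
    subst k; have [y [Ey [Py _ _]]] := Hm b; by exists y.
  by rewrite Hlt //; apply: I1.
move=> k j f b y; rewrite ltnS leq_eqVlt => /orP [/eqP ek|kl]; rewrite ltnS leq_eqVlt => /orP [/eqP ej|jl].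
- subst k j; have [y1 [Ey1 [_ S2 _]]] := Hm b.
  have [y2 [Ey2 [_ _ S3]]] := Hm (act f b).
  rewrite Ey1 => -[<-]; rewrite Ey2; congr Some.
  case: (factor_hom f) => i [s [io [ss Ef le [sf|lt]]]].
    have Ef' := surj_endo_id sf; rewrite Ef' !act_id in Ey2 *.
    by rewrite Ey1 in Ey2; case: Ey2.
  have Efb : act f b = act s (act io b) by rewrite Ef act_comp.
  have [z [Lz Ez]] := S3 _ _ _ lt Efb.
  rewrite (S2 _ _ lt) in Lz; case: Lz => Lz; by rewrite Ez -Lz Ef act_comp.
- subst k; rewrite (Hlt _ _ jl) => Lb.
  have [y2 [Ey2 [_ _ S3]]] := Hm (act f b); rewrite Ey2.
  have [z [Lz Ez]] := S3 _ _ _ jl (erefl _); by rewrite Lz in Lb; case: Lb => <-; rewrite Ez.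
- subst j; have [y1 [Ey1 [_ S2 _]]] := Hm b; rewrite Ey1 => -[<-].
  by rewrite Hlt // S2.
- by rewrite !Hlt //; apply: I2.
Qed.

Lemma stage_inv m : Inv m (stage m).
Proof.
elim: m => [|m IH]; first by split => k *; match goal with H : is_true (_ < 0) |- _ => by rewrite ltn0 in H end.
exact: step.
Qed.

Lemma stage_stable m k (b : B k) : k < m -> stage m b = stage k.+1 b.
Proof.
elim: m => [|m IH] //; rewrite ltnS leq_eqVlt => /orP [/eqP ek|lt]; first by subst.
transitivity (stage m b); last exact: IH.
by rewrite /= /ext lt.
Qed.

Lemma construct : exists L : smap B E, forall m b, P b (L m b).
Proof.
have H k (b : B k) : exists y, stage k.+1 b = Some y /\ P b y.
  by apply: (proj1 (stage_inv k.+1)).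
pose L k b := proj1_sig (constructive_indefinite_description _ (H k b)).
have HL k b : stage k.+1 b = Some (L k b) /\ P b (L k b).
  by rewrite /L; case: constructive_indefinite_description.
have nat k j (f : hom k j) (b : B j) : L k (act f b) = act f (L j b).
  pose M := (maxn k j).+1.
  have kM : k < M by rewrite ltnS leq_maxl.
  have jM : j < M by rewrite ltnS leq_maxr.
  have Lj : stage M b = Some (L j b) by rewrite stage_stable //; exact: (proj1 (HL j b)).
  have := proj2 (stage_inv M) _ _ f _ _ kM jM Lj.
  by rewrite stage_stable // (proj1 (HL k _)) => -[].
exists (@SMap B E L nat) => m b; exact: (proj2 (HL m b)).
Qed.
End Construct.

Definition Jsimp k := {ffun 'I_k.+1 -> bool}.
Definition Jact m n (f : hom m n) (p : Jsimp n) : Jsimp m := [ffun i => p (homf f i)].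
Lemma Jact_id n (p : Jsimp n) : Jact (hid n) p = p.
Proof. by apply/ffunP => i; rewrite ffunE homf_id. Qed.
Lemma Jact_comp m n q (f : hom m n) (g : hom n q) (p : Jsimp q) :
  Jact (hcomp g f) p = Jact f (Jact g p).
Proof. by apply/ffunP => i; rewrite !ffunE homfE. Qed.
Definition J : sSet := @SSet Jsimp Jact Jact_id Jact_comp.

Definition constJ (c : bool) m : J m := [ffun _ => c].

Lemma act_constJ m k (f : hom k m) c : act f (constJ c m) = constJ c k.
Proof. by apply/ffunP => i; rewrite !ffunE. Qed.

Lemma surj_constJ m k (s : hom k m) (p : J m) c : surj s -> act s p = constJ c k -> p = constJ c m.
Proof.
move=> ss E1; apply/ffunP => i; case: (ss i) => a <-.
by move/ffunP: E1 => /(_ a); rewrite !ffunE.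
Qed.

Lemma J0_const (p : J 0) : p = constJ (p ord0) 0.
Proof. by apply/ffunP => i; rewrite ffunE (ord1_eq i ord0). Qed.

Lemma constJ_neq m : constJ false m <> constJ true m.
Proof. by move/ffunP/(_ ord0); rewrite !ffunE. Qed.

Lemma sub_ext n (P : forall j, hom j n -> bool) HP j (x y : @subDelta n P HP j) :
  sval x = sval y -> x = y.
Proof.
case: x y => a pa [b pb] /= E1; subst b; congr exist; exact: bool_irrelevance.
Qed.

Lemma bactA (X : bsSet) m m' m'' n n' n'' (f : hom m' m) (f' : hom m'' m')
  (g : hom n' n) (g' : hom n'' n') (x : X m n) :
  bact f' g' (bact f g x) = bact (hcomp f f') (hcomp g g') x.
Proof. by rewrite bact_comp. Qed.

Lemma bump_comm (i j a b c : nat) : i != j -> bump j a = i -> bump i b = j ->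
  bump j (bump a c) = bump i (bump b c).
Proof.
rewrite /bump => nij.
case: (leqP j a) => h1; case: (leqP i b) => h2 /= E1 E2; subst; try lia;
case: (leqP a c) => h3; case: (leqP b c) => h4 /=; try lia;
rewrite ?add1n ?add0n; case: leqP => h5; case: leqP => h6; lia.
Qed.

Lemma lift_comm N (i j : 'I_N.+2) (a b : 'I_N.+1) (c : 'I_N) : i != j ->
  lift j a = i -> lift i b = j -> lift j (lift a c) = lift i (lift b c).
Proof.
move=> nij E1 E2; apply: val_inj => /=; apply: bump_comm.
- by [].
- by rewrite -E1.
- by rewrite -E2.
Qed.

Lemma lift_ne0 N (j : 'I_N.+2) (a : 'I_N.+1) : j != ord0 -> lift j a == ord0 -> a == ord0.
Proof.
move=> nj /eqP/(f_equal val) /=; rewrite /bump; case: leqP => h /=.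
  by rewrite add1n.
by rewrite add0n => ea; apply/eqP/val_inj.
Qed.

Lemma lift_0 N (i : 'I_N.+2) : i != ord0 -> lift i (ord0 : 'I_N.+1) = ord0.
Proof.
move=> ni; apply: val_inj => /=; rewrite /bump leqn0.
by have -> : (i == 0 :> nat) = false by apply/negbTE.
Qed.

Definition v0 n : hom 0 n := @mkhom 0 n (fun _ => ord0) (fun _ _ _ => leqnn 0).
Definition cz n : hom n n := hcomp (v0 n) (toZero n).

Lemma cz_face n (i : 'I_n.+2) : i != ord0 -> hcomp (cz n.+1) (coface i) = hcomp (coface i) (cz n).
Proof. by move=> ni; apply: hom_eq => a; rewrite !homfE !mkhomE lift_0. Qed.

Lemma bdry_fact (E : sSet) m j (g : smap (bdry m.+1) E) (f : bdry m.+1 j) :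
  exists a (f' : hom j m), sval f = hcomp (coface a) f' /\
    g j f = act f' (g m (exist _ (coface a) (coface_bdry a))).
Proof.
case/existsP: (svalP f) => a /forallP H.
exists a, (squeeze a (sval f)); split; first by rewrite squeezeK.
rewrite -smnat; congr (g j _); apply: sub_ext => /=.
by rewrite squeezeK.
Qed.

Lemma bact_swap (X : bsSet) m m' n n' (f : hom m' m) (g : hom n' n) (x : X m n) :
  bact f (hid n') (bact (hid m) g x) = bact (hid m') g (bact f (hid n) x).
Proof. by rewrite !bactA !hcomp_idl !hcomp_idr. Qed.

Lemma bact_split (X : bsSet) m m' n n' n'' (a : hom m' m) (f : hom n' n) (v : hom n'' n') (z : X m n) :
  bact a (hcomp f v) z = bact a v (bact (hid m) f z).
Proof. by rewrite bactA hcomp_idl. Qed.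

Section Emb.
Variable X : bsSet.
Lemma emb_nat m k (z : X m k) i i' j j' (f : hom i' i) (g : hom j' j) (p : box (Delta m) (Delta k) i j) :
  bact (act f p.1) (act g p.2) z = bact f g (bact p.1 p.2 z).
Proof. by rewrite bactA. Qed.
Definition emb m k (z : X m k) : slash (Delta m) X k :=
  @BSMap (box (Delta m) (Delta k)) X (fun i j p => bact p.1 p.2 z) (@emb_nat m k z).
End Emb.

Section HStep.
Variables (X : bsSet) (vf : v_fibrant X) (n : nat) (Hn : smap (prodS (row X n) J) (row X n)).
Hypotheses (A0 : forall m x, Hn m (x, constJ false m) = x)
  (A1 : forall m x, Hn m (x, constJ true m) = bact (hid m) (cz n) x)
  (VFc : forall m (x : X m n.+1) (p : J m) (i j : 'I_n.+2) k (f g : hom k n),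
     i != ord0 -> j != ord0 -> i != j -> k < n -> hcomp (coface j) f = hcomp (coface i) g ->
     bact (hid m) f (Hn m (bact (hid m) (coface j) x, p)) =
     bact (hid m) g (Hn m (bact (hid m) (coface i) x, p))).

Lemma Hn_nat m m' (f : hom m' m) (x : X m n) (p : J m) :
  Hn m' (bact f (hid n) x, act f p) = bact f (hid n) (Hn m (x, p)).
Proof. exact: (smnat Hn f (x, p)). Qed.

Definition BH := prodS (row X n.+1) J.
Definition EH := row X n.+1.

Definition PH m (bt : BH m) (y : EH m) : Prop :=
  [/\ bt.2 = constJ false m -> y = bt.1,
      bt.2 = constJ true m -> y = bact (hid m) (cz n.+1) bt.1 &
      forall i : 'I_n.+2, i != ord0 ->
        bact (hid m) (coface i) y = Hn m (bact (hid m) (coface i) bt.1, bt.2)].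

Lemma PH_const m (x : X m n.+1) c :
  PH (x, constJ c m) (if c then bact (hid m) (cz n.+1) x else x).
Proof.
split => /=.
- by case: c => // /esym /constJ_neq.
- by case: c => // /constJ_neq.
- move=> i ni; case: c.
    by rewrite A1 !bactA !hcomp_idl cz_face.
  by rewrite A0.
Qed.

Lemma PH_surj m k (s : hom k m) (bt : BH m) y : surj s -> PH bt y -> PH (act s bt) (act s y).
Proof.
case: bt => x p ss [P1 P2 P3]; split => /=.
- by move=> /(surj_constJ ss) /P1 ->.
- by move=> /(surj_constJ ss) /P2 ->; rewrite !bactA !hcomp_idl !hcomp_idr.
- move=> i ni.
  change (bact (hid k) (coface i) (bact s (hid n.+1) y) =
    Hn k (bact (hid k) (coface i) (bact s (hid n.+1) x), act s p)).
  by rewrite -bact_swap P3 // -bact_swap Hn_nat.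
Qed.

Section Oracle.
Variables (m : nat) (x : X m.+1 n.+1) (p : J m.+1) (g : smap (bdry m.+1) EH).
Hypothesis Hg : forall i : 'I_m.+2,
  PH (act (coface i) ((x, p) : BH m.+1)) (g m (exist _ (coface i) (coface_bdry i))).

Definition zf (i : 'I_n.+2) : X m.+1 n := Hn m.+1 (bact (hid m.+1) (coface i) x, p).

Lemma KB i' (q : bdry m.+1 i') (i : 'I_n.+2) : i != ord0 ->
  bact (hid i') (coface i) (g i' q) = bact (sval q) (hid n) (zf i).
Proof.
move=> ni; have [a [f' [Eq Ev]]] := bdry_fact g q.
rewrite Ev; have [_ _ P3] := Hg a.
change (bact (hid i') (coface i) (bact f' (hid n.+1) (g m (exist _ (coface a) (coface_bdry a)))) =
   bact (sval q) (hid n) (zf i)).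
rewrite -bact_swap P3 // /zf -!Hn_nat Eq /=.
congr (Hn i' (_, _)).
  by rewrite !bactA !hcomp_idl !hcomp_idr.
first [ exact: act_comp | exact: (esym (act_comp _ _ _)) ].
Qed.

Lemma bmap_bnat k (w : hom k n.+1) i i' j j' (f : hom i' i) (v : hom j' j)
  (q : box (bdry m.+1) (Delta k) i j) :
  bact (hid i') (hcomp w (act v q.2)) (g i' (act f q.1)) =
  bact f v (bact (hid i) (hcomp w q.2) (g i q.1)).
Proof.
rewrite smnat; change (bact (hid i') (hcomp w (hcomp q.2 v)) (bact f (hid n.+1) (g i q.1)) =
  bact f v (bact (hid i) (hcomp w q.2) (g i q.1))).
by rewrite !bactA !hcomp_idl !hcomp_idr hcompA.
Qed.

Definition bmap_fun k (w : hom k n.+1) : slash (bdry m.+1) X k :=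
  @BSMap (box (bdry m.+1) (Delta k)) X (fun i j q => bact (hid i) (hcomp w q.2) (g i q.1))
    (@bmap_bnat k w).

Lemma bmap_nat k' k (f : hom k' k) (w : hom k n.+1) :
  bmap_fun (hcomp w f) = act f (bmap_fun w).
Proof. by apply: bsmap_eq => i j q /=; rewrite hcompA. Qed.

Definition bmap : smap (Delta n.+1) (slash (bdry m.+1) X) :=
  @SMap (Delta n.+1) (slash (bdry m.+1) X) bmap_fun bmap_nat.

Definition Sh : pred 'I_n.+2 := fun i => i != ord0.

Lemma hornE j (f : hom j n.+1) :
  horn_pred ord0 f = [exists i, (i \in Sh) && [forall a, homf f a != i]].
Proof. by apply: eq_existsb. Qed.

Definition yh (i : 'I_n.+2) : slash (Delta m.+1) X n := emb (zf i).

Lemma yh_compat i j : i \in Sh -> j \in Sh -> i != j -> forall k (f g0 : hom k n), k < n ->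
  hcomp (coface j) f = hcomp (coface i) g0 -> act f (yh j) = act g0 (yh i).
Proof.
move=> iS jS nij k f g0 lt Ec; apply: bsmap_eq => a b q /=.
have := VFc x p iS jS nij lt Ec; rewrite /zf => E1.
by rewrite !bact_split E1.
Qed.

Definition hh : smap (horn (ord0 : 'I_n.+2)) (slash (Delta m.+1) X) :=
  glue (@horn_closed n.+1 ord0) hornE yh_compat.

Lemma hb_compat j (w : horn (ord0 : 'I_n.+2) j) :
  slashMap (bdryIncl m.+1) X j (hh j w) = bmap j (hornIncl ord0 j w).
Proof.
have [i [w' [iS Ew Hv]]] := glue_val hornE yh_compat w.
rewrite /hh Hv; apply: bsmap_eq => a b q.
change (bact (sval q.1) (hcomp w' q.2) (zf i) = bact (hid a) (hcomp (sval w) q.2) (g a q.1)).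
rewrite Ew -hcompA [RHS]bact_split KB //.
by rewrite !bactA !hcomp_idl !hcomp_idr.
Qed.

Lemma oracle_kan : (forall c, p <> constJ c m.+1) ->
  exists y, PH ((x, p) : BH m.+1) y /\ forall j (f : bdry m.+1 j), act (sval f) y = g j f.
Proof.
move=> nc.
have [l [Hl1 Hl2]] := @vf m.+1 n.+1 ord0 (ltn0Sn n) hh bmap hb_compat.
pose y := l n.+1 (hid n.+1) m.+1 n.+1 (hid m.+1, hid n.+1).
exists y; split; first split.
- by move=> /= E1; exfalso; apply: (nc false).
- by move=> /= E1; exfalso; apply: (nc true).
- move=> i ni /=.
  have Pi : horn_pred (ord0 : 'I_n.+2) (coface i).
    by apply/existsP; exists i; rewrite ni /=; apply/forallP => a; rewrite homf_coface eq_sym neq_lift.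
  have E1 := Hl1 n (exist _ (coface i) Pi).
  rewrite /hh glue_face // in E1.
  have E2 := smnat l (coface i) (hid n.+1).
  change (l n (hcomp (hid n.+1) (coface i)) = act (coface i) (l n.+1 (hid n.+1))) in E2.
  rewrite hcomp_idl in E2.
  change (l n (coface i) = yh i) in E1.
  rewrite E1 in E2.
  have E3 := f_equal (fun s : slash (Delta m.+1) X n => s m.+1 n (hid m.+1, hid n)) E2.
  rewrite /= bact_id in E3; rewrite /zf in E3; rewrite E3 hcomp_idr.
  have E4 := bsmnat (l n.+1 (hid n.+1)) (hid m.+1) (coface i) (hid m.+1, hid n.+1).
  rewrite /= !hcomp_idl in E4; by rewrite E4.
- move=> j f; change (bact (sval f) (hid n.+1) y = g j f).
  have E1 := f_equal (fun s : slash (bdry m.+1) X n.+1 => s j n.+1 (f, hid n.+1)) (Hl2 n.+1 (hid n.+1)).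
  rewrite /= hcomp_idl bact_id in E1; rewrite -E1.
  have E4 := bsmnat (l n.+1 (hid n.+1)) (sval f) (hid n.+1) (hid m.+1, hid n.+1).
  by rewrite /= !hcomp_idl in E4; rewrite /y -E4.
Qed.
End Oracle.

Lemma hstep : exists H' : smap (prodS (row X n.+1) J) (row X n.+1),
  [/\ forall m x, H' m (x, constJ false m) = x,
      forall m x, H' m (x, constJ true m) = bact (hid m) (cz n.+1) x &
      forall m x p (i : 'I_n.+2), i != ord0 ->
        bact (hid m) (coface i) (H' m (x, p)) = Hn m (bact (hid m) (coface i) x, p)].
Proof.
have Or0 : forall b : BH 0, exists y, PH b y.
  case=> x p; rewrite (J0_const p); eexists; exact: PH_const.
have OrS : forall m (b : BH m.+1) (g : smap (bdry m.+1) EH),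
     (forall i : 'I_m.+2, PH (act (coface i) b) (g m (exist _ (coface i) (coface_bdry i)))) ->
     exists y, PH b y /\ forall j (f : bdry m.+1 j), act (sval f) y = g j f.
  move=> m [x p] g Hg.
  case: (classic (exists c, p = constJ c m.+1)) => [[c Ec]|nc]; last first.
    apply: oracle_kan => // c Ec; apply: nc; by exists c.
  subst p; eexists; split; first exact: PH_const.
  move=> j f; have [a [f' [Eq Ev]]] := bdry_fact g f.
  have [P1 P2 _] := Hg a.
  rewrite Ev Eq act_comp; congr (act f' _).
  case: c {Hg} P1 P2 => /= P1 P2.
    rewrite P2; last exact: act_constJ.
    change (bact (coface a) (hid n.+1) (bact (hid m.+1) (cz n.+1) x) =
      bact (hid m) (cz n.+1) (bact (coface a) (hid n.+1) x)).
    by rewrite bact_swap.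
  by rewrite P1; last exact: act_constJ.
have [L HL] := construct PH_surj Or0 OrS.
exists L; split.
- by move=> m x; have [P1 _ _] := HL m (x, constJ false m); apply: P1.
- by move=> m x; have [_ P2 _] := HL m (x, constJ true m); apply: P2.
- by move=> m x p i ni; have [_ _ P3] := HL m (x, p); apply: P3.
Qed.
End HStep.

Definition VFc (X : bsSet) n (Hn : smap (prodS (row X n) J) (row X n)) :=
  forall m (x : X m n.+1) (p : J m) (i j : 'I_n.+2) k (f g : hom k n),
     i != ord0 -> j != ord0 -> i != j -> k < n -> hcomp (coface j) f = hcomp (coface i) g ->
     bact (hid m) f (Hn m (bact (hid m) (coface j) x, p)) =
     bact (hid m) g (Hn m (bact (hid m) (coface i) x, p)).

Lemma VFc_next (X : bsSet) n (Hn : smap (prodS (row X n) J) (row X n))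
  (H' : smap (prodS (row X n.+1) J) (row X n.+1)) :
  (forall m x p (i : 'I_n.+2), i != ord0 ->
     bact (hid m) (coface i) (H' m (x, p)) = Hn m (bact (hid m) (coface i) x, p)) ->
  VFc H'.
Proof.
move=> VF m x p i j k f g ni nj nij _ Ec.
case: (unliftP j i) => [a Ea|Ea]; last by rewrite Ea eqxx in nij.
case: (unliftP i j) => [b Eb|Eb]; last by rewrite Eb eqxx in nij.
have na : a != ord0.
  apply/negP => /eqP za; move: Ea; rewrite za lift_0 // => E0; by rewrite E0 eqxx in ni.
have nb : b != ord0.
  apply/negP => /eqP zb; move: Eb; rewrite zb lift_0 // => E0; by rewrite E0 eqxx in nj.
have Ecc := f_equal (@homf _ _) Ec.
have mf : forall c, homf f c != a.
  move=> c; apply/eqP => E1; have := f_equal (fun h => h c) Ecc; rewrite /= !homfE !homf_coface E1 -Ea.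
  by move=> E2; move: (neq_lift i (homf g c)); rewrite -E2 eqxx.
have mg : forall c, homf g c != b.
  move=> c; apply/eqP => E1; have := f_equal (fun h => h c) Ecc; rewrite /= !homfE !homf_coface E1 -Eb.
  by move=> E2; move: (neq_lift j (homf f c)); rewrite E2 eqxx.
have Ef := squeezeK mf; have Eg := squeezeK mg.
have LC c : lift j (lift a c) = lift i (lift b c) by apply: lift_comm; rewrite // -?Ea -?Eb.
have Efg : squeeze a f = squeeze b g.
  apply: hom_eq => c; apply: (@lift_inj _ b); apply: (@lift_inj _ i).
  rewrite -LC.
  have Fc : homf f c = lift a (homf (squeeze a f) c) by rewrite -{1}Ef homfE homf_coface.
  have Gc : homf g c = lift b (homf (squeeze b g) c) by rewrite -{1}Eg homfE homf_coface.
  rewrite -Fc -Gc; have := f_equal (fun h => h c) Ecc; by rewrite /= !homfE !homf_coface.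
rewrite -Ef -Eg -Efg !bact_split !VF //.
congr (bact _ _ (Hn m (_, p))); rewrite !bactA !hcomp_idl; congr (bact _ _ x).
by apply: hom_eq => c; rewrite !homfE !homf_coface LC.
Qed.

Definition H0 (X : bsSet) : smap (prodS (row X 0) J) (row X 0) :=
  @SMap (prodS (row X 0) J) (row X 0) (fun m q => q.1) (fun _ _ _ _ => erefl).

Lemma homotopy (X : bsSet) : v_fibrant X -> forall n,
  exists Hn : smap (prodS (row X n) J) (row X n),
  [/\ forall m x, Hn m (x, constJ false m) = x,
      forall m x, Hn m (x, constJ true m) = bact (hid m) (cz n) x & VFc Hn].
Proof.
move=> vf; elim=> [|n [Hn [A0 A1 V]]].
  exists (H0 X); split; [by [] | by move=> m x /=; rewrite (hom0_eq (cz 0) (hid 0)) bact_id |].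
  by move=> m x p i j k f g _ _ _; rewrite ltn0.
have [H' [B0 B1 B2]] := hstep vf A0 A1 V.
exists H'; split => //; exact: VFc_next B2.
Qed.

Section Tau.
Variable K : sSet.

Lemma kpath_cat (x y z : K 0) p q : kpath x y p -> kpath y z q -> kpath x z (p ++ q).
Proof. by elim=> [//|x0 y0 e p0 Hs _ IH] Hq /=; apply: kpath_cons => //; apply: IH. Qed.

Lemma tau1_refl (x : K 0) : tau1_iso x x.
Proof. exists [::], [::]; split; try constructor; exact: kpath_nil. Qed.

Lemma tau1_sym (x y : K 0) : tau1_iso x y -> tau1_iso y x.
Proof. by case=> p [q [H1 H2 H3 H4]]; exists q, p; split. Qed.

Lemma tau1_trans (x y z : K 0) : tau1_iso x y -> tau1_iso y z -> tau1_iso x z.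
Proof.
case=> p1 [q1 [H1 H2 H3 H4]] [p2 [q2 [G1 G2 G3 G4]]].
exists (p1 ++ p2), (q2 ++ q1); split.
- exact: kpath_cat H1 G1.
- exact: kpath_cat G2 H2.
- have E : (p1 ++ p2) ++ q2 ++ q1 = p1 ++ (p2 ++ q2) ++ q1 by rewrite !catA.
  rewrite E; exact: hrel_trans (hrel_cong H1 G3 H2) H3.
- have E : (q2 ++ q1) ++ p1 ++ p2 = q2 ++ (q1 ++ p1) ++ p2 by rewrite !catA.
  rewrite E; exact: hrel_trans (hrel_cong G2 H4 G1) G4.
Qed.
End Tau.

Section TauMap.
Variables (K L : sSet) (F : smap K L).

Lemma esrc_map e : esrc (F 1 e) = F 0 (esrc e).
Proof. by rewrite /esrc smnat. Qed.
Lemma etgt_map e : etgt (F 1 e) = F 0 (etgt e).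
Proof. by rewrite /etgt smnat. Qed.
Lemma face2_map i s : face2 i (F 2 s) = F 1 (face2 i s).
Proof. by rewrite /face2 smnat. Qed.
Lemma degen_map x : degen (F 0 x) = F 1 (degen x).
Proof. by rewrite /degen smnat. Qed.

Lemma kpath_map x y p : kpath x y p -> kpath (F 0 x) (F 0 y) (map (F 1) p).
Proof.
elim=> [x0|x0 y0 e p0 Hs _ IH] /=; first exact: kpath_nil.
apply: kpath_cons; first by rewrite esrc_map Hs.
by rewrite etgt_map.
Qed.

Lemma hrel_map x y p q : hrel x y p q -> hrel (F 0 x) (F 0 y) (map (F 1) p) (map (F 1) q).
Proof.
elim=> {x y p q}.
- by move=> x y p Hp; apply: hrel_refl; exact: (kpath_map Hp).
- by move=> x y p q _ IH; apply: hrel_sym.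
- by move=> x y p q r _ IH1 _ IH2; apply: hrel_trans IH2.
- move=> z x y w q p p' r Hq _ IH Hr; rewrite !map_cat.
  exact: hrel_cong (kpath_map Hq) IH (kpath_map Hr).
- by move=> x /=; rewrite -degen_map; apply: hrel_degen.
- move=> x z s Hk /=; rewrite -!face2_map; apply: hrel_simplex.
  by move: (kpath_map Hk) => /=; rewrite -!face2_map.
Qed.

Lemma tau1_map (x y : K 0) : tau1_iso x y -> tau1_iso (F 0 x) (F 0 y).
Proof.
case=> p [q [H1 H2 H3 H4]]; exists (map (F 1) p), (map (F 1) q); split.
- exact: kpath_map.
- exact: kpath_map.
- by rewrite -map_cat; apply: (hrel_map H3).
- by rewrite -map_cat; apply: (hrel_map H4).
Qed.
End TauMap.

Definition jv (l : seq bool) k : J k := [ffun i : 'I_k.+1 => nth false l i].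

Lemma J_iso : tau1_iso (constJ false 0 : J 0) (constJ true 0).
Proof.
have Ex : forall k (a b : J k), (forall i : 'I_k.+1, a i = b i) -> a = b.
  by move=> k a b H; apply/ffunP.
pose e01 := jv [:: false; true] 1.
pose e10 := jv [:: true; false] 1.
pose s1 := jv [:: false; true; false] 2.
pose s2 := jv [:: true; false; true] 2.
have c2 (P : 'I_2 -> Prop) : P ord0 -> P (Ordinal (isT : 1 < 2)) -> forall i, P i.
  by move=> h0 h1 [[|[|]]] //= Hi; [rewrite (_ : Ordinal Hi = ord0) | rewrite (_ : Ordinal Hi = Ordinal (isT : 1 < 2))] => //; apply: val_inj.
have c1 (P : 'I_1 -> Prop) : P ord0 -> forall i, P i.
  by move=> h0 i; rewrite (ord1_eq i ord0).
have S01 : esrc e01 = constJ false 0.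
  by apply: Ex; apply: c1; rewrite /esrc /= !ffunE homf_coface.
have T01 : etgt e01 = constJ true 0.
  by apply: Ex; apply: c1; rewrite /etgt /= !ffunE homf_coface.
have S10 : esrc e10 = constJ true 0.
  by apply: Ex; apply: c1; rewrite /esrc /= !ffunE homf_coface.
have T10 : etgt e10 = constJ false 0.
  by apply: Ex; apply: c1; rewrite /etgt /= !ffunE homf_coface.
have K1 : kpath (constJ false 0 : J 0) (constJ true 0) [:: e01].
  by apply: kpath_cons S01 _; rewrite T01; exact: kpath_nil.
have K2 : kpath (constJ true 0 : J 0) (constJ false 0) [:: e10].
  by apply: kpath_cons S10 _; rewrite T10; exact: kpath_nil.
have F1 : face2 ord2_3 s1 = e01 /\ face2 ord0 s1 = e10 /\ face2 ord1_3 s1 = degen (constJ false 0 : J 0).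
  split; [|split]; apply: Ex; apply: c2; by rewrite /face2 /degen /= !ffunE ?homf_coface ?mkhomE.
have F2 : face2 ord2_3 s2 = e10 /\ face2 ord0 s2 = e01 /\ face2 ord1_3 s2 = degen (constJ true 0 : J 0).
  split; [|split]; apply: Ex; apply: c2; by rewrite /face2 /degen /= !ffunE ?homf_coface ?mkhomE.
exists [:: e01], [:: e10]; split => //.
- case: F1 => A [B C]; apply: hrel_trans (hrel_degen _).
  rewrite -C /= -A -B; apply: hrel_simplex; rewrite A B; exact: (kpath_cat K1 K2).
- case: F2 => A [B C]; apply: hrel_trans (hrel_degen _).
  rewrite -C /= -A -B; apply: hrel_simplex; rewrite A B; exact: (kpath_cat K2 K1).
Qed.

Lemma Jact_const m k (f : hom k m) c : Jact f (constJ c m) = constJ c k.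
Proof. by apply/ffunP => i; rewrite !ffunE. Qed.

Section Main.
Variables (X : bsSet) (n : nat).

Lemma rr_nat m' m (f : hom m' m) (x : X m n) :
  bact (hid m') (v0 n) (bact f (hid n) x) = bact f (hid 0) (bact (hid m) (v0 n) x).
Proof. by rewrite !bactA !hcomp_idl !hcomp_idr. Qed.

Definition rr : smap (row X n) (row X 0) :=
  @SMap (row X n) (row X 0) (fun m x => bact (hid m) (v0 n) x) rr_nat.

Variable Z : sSet.

Lemma PR_nat k' k (f : hom k' k) (s : expS (row X 0) Z k) :
  smcomp (act f s) (smprod rr (smid (Delta k'))) = act (s := expS (row X n) Z) f (smcomp s (smprod rr (smid (Delta k)))).
Proof. by apply: smap_eq => j [x g]. Qed.

Definition PR : smap (expS (row X 0) Z) (expS (row X n) Z) :=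
  @SMap (expS (row X 0) Z) (expS (row X n) Z) (fun k s => smcomp s (smprod rr (smid (Delta k)))) PR_nat.

Lemma RS (a : expS (row X 0) Z 0) : precomp (rowMap X n) (precomp rr a) = a.
Proof.
apply: smap_eq => j [x g] /=; congr (a j (_, g)).
by rewrite bactA hcomp_idl (hom0_eq (hcomp (toZero n) (v0 n)) (hid 0)) bact_id.
Qed.

Variables (H : smap (prodS (row X n) J) (row X n))
  (A0 : forall m x, H m (x, constJ false m) = x)
  (A1 : forall m x, H m (x, constJ true m) = bact (hid m) (cz n) x).
Variable b : expS (row X n) Z 0.

Lemma Phi_nat k j' j (f : hom j' j) (q : prodS (row X n) (Delta k) j) (psi : J k) :
  b j' (H j' ((act f q).1, act (act f q).2 psi), toZero j') =
  act f (b j (H j (q.1, act q.2 psi), toZero j)).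
Proof.
rewrite -(smnat b); congr (b j' (_, _)); last exact: hom0_eq.
etransitivity; last exact: (smnat H f (q.1, act q.2 psi)).
congr (H j' (_, _)); exact: act_comp.
Qed.

Definition Phi_fun k (psi : J k) : expS (row X n) Z k :=
  @SMap (prodS (row X n) (Delta k)) Z (fun j q => b j (H j (q.1, act q.2 psi), toZero j))
    (fun j' j f q => Phi_nat f q psi).

Lemma Phi_fun_nat k' k (f : hom k' k) (psi : J k) : Phi_fun (act f psi) = act f (Phi_fun psi).
Proof.
apply: smap_eq => j [x g] /=; congr (b j (H j (x, _), _)).
first [exact: act_comp | exact: (esym (act_comp _ _ _))].
Qed.

Definition Phi : smap J (expS (row X n) Z) := @SMap J (expS (row X n) Z) Phi_fun Phi_fun_nat.

Lemma HI : tau1_iso b (PR 0 (precomp (rowMap X n) b)).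
Proof.
have E0 : Phi 0 (constJ false 0) = b.
  apply: smap_eq => j [x g] /=; rewrite ?act_constJ ?Jact_const A0; congr (b j (x, _)); exact: hom0_eq.
have E1 : Phi 0 (constJ true 0) = PR 0 (precomp (rowMap X n) b).
  apply: smap_eq => j [x g] /=; rewrite ?act_constJ ?Jact_const A1; congr (b j (_, _)); last exact: hom0_eq.
  by rewrite bactA hcomp_idl.
by rewrite -E1 -{1}E0; apply: tau1_map J_iso.
Qed.
End Main.

Theorem proposition2p8 (X : bsSet) :
  v_fibrant X -> forall n : nat, weak_cat_equiv (rowMap X n).
Proof.
move=> vf n Z _.
have [H [A0 A1 _]] := homotopy vf n.
split.
- move=> b b' Hi.
  have h1 := tau1_map (PR X n Z) Hi.
  apply: tau1_trans (HI A0 A1 b) _.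
  apply: tau1_trans h1 _.
  exact: tau1_sym (HI A0 A1 b').
- move=> a; exists (precomp (rr X n) a); rewrite RS; exact: tau1_refl.
Qed.
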